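(* Fix labels $z_1,\dots,z_n\in[K]$ such that every community size $n_k=\#\{i:z_i=k\}$ is positive (so $\mathbf{N}=\mathrm{diag}(n_1,\dots,n_K)$ is invertible). Then $\tilde{\mathbf{L}}\tilde{\mathbf{L}}^\top\mathbf{x}=T\mathbf{x}$ for every $\mathbf{x}\in\mathcal{S}^\perp$, and if $\tilde{\mathbf{x}}^{(1)},\dots,\tilde{\mathbf{x}}^{(K)}$ are orthonormal left singular vectors of $\tilde{\mathbf{M}}$ for the singular values $\tilde\lambda_1,\dots,\tilde\lambda_K$, then the vectors $\tilde{\mathbf{u}}^{(i)}=\mathbf{\Phi}\mathbf{N}^{-1/2}\tilde{\mathbf{x}}^{(i)}\in\mathcal{S}$ are orthonormal and satisfy $\tilde{\mathbf{L}}\tilde{\mathbf{L}}^\top\tilde{\mathbf{u}}^{(i)}=\tilde\lambda_i^2\tilde{\mathbf{u}}^{(i)}$. Consequently the SVD of $\tilde{\mathbf{L}}$ consists of the singular value $\sqrt T$ with multiplicity $n-K$, whose left singular vectors form an orthonormal basis of $\mathcal{S}^\perp$, together with the singular values $\tilde\lambda_1,\dots,\tilde\lambda_K$ with corresponding left singular vectors $\tilde{\mathbf{u}}^{(1)},\dots,\tilde{\mathbf{u}}^{(K)}$.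
   Context: Let $\mathbf{B}^{(1)},\dots,\mathbf{B}^{(T)}\in[0,1]^{K\times K}$ be symmetric with all entries positive, $\rho\in(0,1]$, and $P^{(t)}_{ij}=\rho B^{(t)}_{z_iz_j}$. $\tilde d^{(t)}_i=\sum_jP^{(t)}_{ij}$, $\tilde{\mathbf{D}}^{(t)}=\mathrm{diag}(\tilde d^{(t)}_i)$, $\tilde{\mathbf{L}}^{(t)}=\mathbf{I}_n-\tilde{\mathbf{D}}^{(t)-1/2}\mathbf{P}^{(t)}\tilde{\mathbf{D}}^{(t)-1/2}$, $\tilde{\mathbf{L}}=[\tilde{\mathbf{L}}^{(1)}\mid\cdots\mid\tilde{\mathbf{L}}^{(T)}]\in\mathbb{R}^{n\times nT}$. Community matrices: $\tilde Q^{(t)}_{kl}=\frac{n_k}{n}\frac{n_l}{n}B^{(t)}_{kl}$, $\tilde{\mathbf{D}}_Q^{(t)}$ the diagonal matrix of row sums of $\tilde{\mathbf{Q}}^{(t)}$, $\tilde{\mathbf{M}}^{(t)}=\mathbf{I}_K-\tilde{\mathbf{D}}_Q^{(t)-1/2}\tilde{\mathbf{Q}}^{(t)}\tilde{\mathbf{D}}_Q^{(t)-1/2}$, $\tilde{\mathbf{M}}=[\tilde{\mathbf{M}}^{(1)}\mid\cdots\mid\tilde{\mathbf{M}}^{(T)}]\in\mathbb{R}^{K\times KT}$ with singular values $\tilde\lambda_1\le\cdots\le\tilde\lambda_K$. $\mathbf{\Phi}\in\{0,1\}^{n\times K}$ has entries $\Phi_{ik}=1$ iff $z_i=k$; $\mathcal{S}$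 is the column span of $\mathbf{\Phi}$ and $\mathcal{S}^\perp=\{\mathbf{x}\in\mathbb{R}^n:\sum_{i:z_i=k}x_i=0\ \forall k\}$. *)

(* Defs.v *)
From HB Require Import structures.
From mathcomp Require Import all_boot all_order all_algebra.
Set Implicit Arguments. Unset Strict Implicit. Unset Printing Implicit Defensive.
Import Order.TTheory GRing.Theory Num.Theory.
Local Open Scope ring_scope.

Section Defs.
Variable R : rcfType.

Definition diag_invsqrt m (d : 'I_m -> R) : 'M[R]_m :=
  diag_mx (\row_i (Num.sqrt (d i))^-1).

Variables (n K T : nat) (z : 'I_n -> 'I_K) (B : 'I_T -> 'M[R]_K) (rho : R).

Definition csize (k : 'I_K) : nat := #|[set i | z i == k]|.

Definition Pmat (t : 'I_T) : 'M[R]_n := \matrix_(i, j) (rho * B t (z i) (z j)).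
Definition deg (t : 'I_T) (i : 'I_n) : R := \sum_j Pmat t i j.
Definition Lt (t : 'I_T) : 'M[R]_n :=
  1%:M - diag_invsqrt (deg t) *m Pmat t *m diag_invsqrt (deg t).
Definition Lfull : 'M[R]_(n, \sum_(t < T) n) := @mxrow R T (fun _ => n) n Lt.

Definition Qmat (t : 'I_T) : 'M[R]_K :=
  \matrix_(k, l) ((csize k)%:R / n%:R * ((csize l)%:R / n%:R) * B t k l).
Definition degQ (t : 'I_T) (k : 'I_K) : R := \sum_l Qmat t k l.
Definition Mt (t : 'I_T) : 'M[R]_K :=
  1%:M - diag_invsqrt (degQ t) *m Qmat t *m diag_invsqrt (degQ t).
Definition Mfull : 'M[R]_(K, \sum_(t < T) K) := @mxrow R T (fun _ => K) K Mt.

Definition Phi : 'M[R]_(n, K) := \matrix_(i, k) (z i == k)%:R.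
Definition Ninvsqrt : 'M[R]_K := diag_invsqrt (fun k => (csize k)%:R).

Definition inS (x : 'cV[R]_n) : Prop := exists c : 'cV[R]_K, x = Phi *m c.
Definition inSperp (x : 'cV[R]_n) : Prop :=
  forall k : 'I_K, \sum_(i | z i == k) x i 0 = 0.
End Defs.

Definition orthonormal_vecs (R : rcfType) m p (x : 'I_p -> 'cV[R]_m) : Prop :=
  forall i j, (x i)^T *m x j = (i == j)%:R%:M.

Definition left_sing_vec (R : rcfType) m p (A : 'M[R]_(m, p)) (s : R) (x : 'cV[R]_m) : Prop :=
  0 <= s /\ x^T *m x = 1%:M /\
  exists y : 'cV[R]_p, y^T *m y = 1%:M /\ A *m y = s *: x /\ A^T *m x = s *: y.

(* Main.v *)
Require Import Defs.
From mathcomp Require Import all_boot all_order all_algebra.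
From mathcomp Require Import ring lra zify.
Import Order.TTheory GRing.Theory Num.Theory.
Local Open Scope ring_scope.
Set Implicit Arguments. Unset Strict Implicit. Unset Printing Implicit Defensive.
Local Open Scope ring_scope.

Lemma tr_mul0 (R : comPzRingType) m n p (A : 'M[R]_(m, n)) (B : 'M[R]_(n, p)) :
  A *m B = 0 -> B^T *m A^T = 0.
Proof. by move=> h; rewrite -trmx_mul h trmx0. Qed.

Lemma unit_perp (R : rcfType) m k (A : 'M[R]_(k, m)) : (k < m)%N ->
  exists v : 'rV[R]_m, A *m v^T = 0 /\ v *m v^T = 1%:M.
Proof.
move=> km.
have rk : (0 < \rank (kermx A^T))%N.
  rewrite mxrank_ker; have := rank_leq_col A^T; lia.
have kz : kermx A^T != 0 by rewrite -mxrank_eq0 -lt0n.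
have [i Hi] : exists i, row i (kermx A^T) != 0.
  apply/existsP; move: kz; apply: contraR; rewrite negb_exists => /forallP H.
  apply/eqP/row_matrixP => i; rewrite row0; apply/eqP; by have := H i; rewrite negbK.
have [w [wA Hw]] : exists w : 'rV_m, w *m A^T = 0 /\ w != 0.
  by exists (row i (kermx A^T)); rewrite -row_mul mulmx_ker row0.
set q := (w *m w^T) 0 0.
have q0 : 0 < q.
  have qE : q = \sum_j w 0 j ^+ 2.
    by rewrite /q mxE; apply: eq_bigr => j _; rewrite mxE expr2.
  rewrite qE lt_def sumr_ge0 ?andbT; last by move=> j _; rewrite sqr_ge0.
  apply: contra Hw => /eqP Hs; apply/eqP/rowP => j; rewrite mxE.
  have := @psumr_eq0P _ _ predT (fun j => w 0 j ^+ 2) (fun j _ => sqr_ge0 _) Hs j isT.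
  by move/eqP; rewrite sqrf_eq0 => /eqP.
exists ((Num.sqrt q)^-1 *: w); split.
  have Aw : A *m w^T = 0 by rewrite -[A]trmxK -trmx_mul wA trmx0.
  by rewrite linearZ /= -scalemxAr Aw scaler0.
rewrite linearZ /= -scalemxAr -scalemxAl scalerA.
apply/matrixP => a b; rewrite !ord1 [LHS]mxE -/q mxE eqxx mulr1n.
have sq := sqrtr_gt0 q; rewrite q0 in sq.
rewrite -[X in _ * X](sqr_sqrtr (ltW q0)); field.
by rewrite gt_eqF.
Qed.

Lemma ortho_complete (R : rcfType) m p : forall k (A : 'M[R]_(k, m)),
  (k + p <= m)%N -> A *m A^T = 1%:M ->
  exists C : 'M[R]_(p, m), A *m C^T = 0 /\ C *m C^T = 1%:M.
Proof.
elim: p => [|p IH] k A hkp hA.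
  by exists 0; split; apply/matrixP => i j; [rewrite trmx0 mulmx0|case: i].
have [v [Av vv]] := unit_perp A (ltac:(lia) : (k < m)%N).
have hA' : col_mx A v *m (col_mx A v)^T = 1%:M.
  have vA : v *m A^T = 0 by have := tr_mul0 Av; rewrite trmxK.
  rewrite tr_col_mx mul_col_row hA vv Av vA.
  by rewrite (scalar_mx_block k 1).
have [C' [AC CC]] := IH _ (col_mx A v) (ltac:(lia)) hA'.
rewrite -[p.+1]/(1 + p)%N; exists (col_mx v C'); split.
  move: AC; rewrite mul_col_mx => AC.
  have [AC1 AC2] : A *m C'^T = 0 /\ v *m C'^T = 0.
    by split; [have := congr1 usubmx AC | have := congr1 dsubmx AC];
      rewrite ?col_mxKu ?col_mxKd => ->; apply/matrixP => i j; rewrite !mxE.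
  by rewrite tr_col_mx mul_mx_row Av AC1 row_mx0.
move: AC; rewrite mul_col_mx => AC.
have [AC1 AC2] : A *m C'^T = 0 /\ v *m C'^T = 0.
  by split; [have := congr1 usubmx AC | have := congr1 dsubmx AC];
    rewrite ?col_mxKu ?col_mxKd => ->; apply/matrixP => i j; rewrite !mxE.
have Cv : C' *m v^T = 0 by have := tr_mul0 AC2; rewrite trmxK.
by rewrite tr_col_mx mul_col_row vv CC AC2 Cv (scalar_mx_block 1 p).
Qed.


Lemma colTcol (R : comPzRingType) n p q (A : 'M[R]_(n, p)) (B : 'M[R]_(n, q)) c d :
  (col c A)^T *m col d B = ((A^T *m B) c d)%:M.
Proof.
apply/matrixP => i j; rewrite !ord1 !mxE /= mulr1n.
by apply: eq_bigr => a _; rewrite !mxE.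
Qed.

Lemma mxcols_mul (R : comPzRingType) n p q (f : 'I_p -> 'cV[R]_n) (g : 'I_q -> 'cV[R]_n) :
  (\matrix_(a, c) f c a 0)^T *m (\matrix_(a, d) g d a 0) =
  \matrix_(c, d) ((f c)^T *m g d) 0 0.
Proof.
apply/matrixP => c d; rewrite !mxE.
by apply: eq_bigr => a _; rewrite !mxE.
Qed.

Lemma trZ (R : pzSemiRingType) m n (a : R) (A : 'M[R]_(m, n)) : (a *: A)^T = a *: A^T.
Proof. by apply/matrixP => i j; rewrite !mxE. Qed.

Lemma orth_sq (R : comPzRingType) n p (U : 'M[R]_(n, p)) :
  p = n -> U^T *m U = 1%:M -> U *m U^T = 1%:M.
Proof. by move=> e; move: U; rewrite e => U; apply: mulmx1C. Qed.

Lemma svd_assemble (R : rcfType) n N p (L : 'M[R]_(n, N)) (U : 'M[R]_(n, p))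
  (s : 'rV[R]_p) (J : 'M[R]_(N, n)) :
  p = n -> U^T *m U = 1%:M -> J^T *m J = 1%:M ->
  (forall c, 0 <= s 0 c) ->
  (forall c, L *m L^T *m col c U = (s 0 c ^+ 2) *: col c U) ->
  (forall c, s 0 c = 0 -> L^T *m col c U = 0 /\ L *m J *m col c U = 0) ->
  exists V : 'M[R]_(N, p), V^T *m V = 1%:M /\ L = U *m diag_mx s *m V^T.
Proof.
move=> pn UU JJ s0 hLL hz.
pose vcol c := if 0 < s 0 c then (s 0 c)^-1 *: (L^T *m col c U) else J *m col c U.
exists (\matrix_(a, c) vcol c a 0); split.
  rewrite mxcols_mul; apply/matrixP => c d; rewrite [LHS]mxE.
  suff -> : (vcol c)^T *m vcol d = (c == d)%:R%:M by rewrite !mxE.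
  have Ucd : (col c U)^T *m col d U = (c == d)%:R%:M.
    by rewrite colTcol UU mxE.
  rewrite /vcol; case: ifP => pc; case: ifP => pd.
  - rewrite trZ -scalemxAl -scalemxAr trmx_mul trmxK -mulmxA (mulmxA L) hLL -scalemxAr Ucd.
    rewrite !scale_scalar_mx; case: eqP => [->|_] /=; last by rewrite !mulr0.
    congr (_%:M); field; by rewrite gt_eqF.
  - have sd : s 0 d = 0 by apply/eqP; rewrite eq_le s0 andbT leNgt pd.
    have [_ h] := hz d sd.
    rewrite trZ -scalemxAl trmx_mul trmxK -mulmxA (mulmxA L) h mulmx0 scaler0.
    case: eqP => [e|_]; last by apply/matrixP => i j; rewrite !mxE /= ?mulr0n ?mul0rn.
    by move: pc; rewrite e sd ltxx.
  - have sc : s 0 c = 0 by apply/eqP; rewrite eq_le s0 andbT leNgt pc.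
    have [_ h] := hz c sc.
    have h' : (col c U)^T *m J^T *m L^T = 0 by rewrite -trmx_mul -trmx_mul mulmxA h trmx0.
    rewrite -scalemxAr trmx_mul mulmxA h' mul0mx scaler0.
    case: eqP => [e|_]; last by apply/matrixP => i j; rewrite !mxE /= ?mulr0n ?mul0rn.
    by move: pd; rewrite -e sc ltxx.
  - by rewrite trmx_mul -mulmxA (mulmxA J^T) JJ mul1mx Ucd.
have LU : L^T *m U = \matrix_(a, c) vcol c a 0 *m diag_mx s.
  apply/matrixP => a c; rewrite mul_mx_diag [RHS]mxE [X in _ = X * _]mxE /vcol.
  have -> : (L^T *m U) a c = (L^T *m col c U) a 0 by rewrite !mxE; apply: eq_bigr => b _; rewrite !mxE.
  case: ifP => pc.
    by rewrite [X in _ = X * _]mxE mulrAC mulVf ?mul1r // gt_eqF.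
  have sc : s 0 c = 0 by apply/eqP; rewrite eq_le s0 andbT leNgt pc.
  by have [-> _] := hz c sc; rewrite sc mulr0 mxE.
have UU' : U *m U^T = 1%:M.
  by apply: orth_sq.
by rewrite -mulmxA -tr_diag_mx -trmx_mul -LU trmx_mul trmxK mulmxA UU' mul1mx.
Qed.


Lemma mxcolZ (R : pzRingType) T (p_ : 'I_T -> nat) m (a : R) (C : forall t, 'M[R]_(p_ t, m)) :
  \mxcol_t (a *: C t) = a *: \mxcol_t C t.
Proof. by apply/matrixP => i j; rewrite !mxE. Qed.

Lemma submxcolZ (R : pzRingType) T (p_ : 'I_T -> nat) m (a : R)
  (A : 'M[R]_(\sum_t p_ t, m)) t :
  submxcol (a *: A) t = a *: submxcol A t.
Proof. by apply/matrixP => i j; rewrite !mxE. Qed.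

Lemma mxcolTmxcol (R : comPzRingType) T (p_ : 'I_T -> nat) m m'
  (C : forall t, 'M[R]_(p_ t, m)) (D : forall t, 'M[R]_(p_ t, m')) :
  (\mxcol_t C t)^T *m \mxcol_t D t = \sum_t (C t)^T *m D t.
Proof. by rewrite tr_mxcol mul_mxrow_mxcol. Qed.

Section Model.
Variables (R : rcfType) (n K T : nat) (z : 'I_n -> 'I_K) (B : 'I_T -> 'M[R]_K) (rho : R).

Lemma sum_z (G : 'I_K -> R) : \sum_j G (z j) = \sum_k (csize z k)%:R * G k.
Proof.
rewrite (partition_big z predT) //=; apply: eq_bigr => k _.
rewrite (eq_bigr (fun _ => G k)); last by move=> j /eqP ->.
rewrite sumr_const /csize mulr_natl; congr (_ *+ _).
by apply: eq_card => j; rewrite !inE.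
Qed.


Lemma sum_delta (F : 'I_K -> R) c : \sum_k (k == c)%:R * F k = F c.
Proof.
rewrite (bigD1 c) //= eqxx mul1r big1 ?addr0 // => k /negbTE ->; by rewrite mul0r.
Qed.

Lemma sum_delta' (F : 'I_K -> R) c : \sum_k (c == k)%:R * F k = F c.
Proof. by rewrite -(sum_delta F c); apply: eq_bigr => k _; rewrite eq_sym. Qed.

Definition ek t k := \sum_l (csize z l)%:R * B t k l.

Lemma deg_E t i : deg z B rho t i = rho * ek t (z i).
Proof.
rewrite /deg /ek; under eq_bigr do rewrite mxE.
rewrite (sum_z (fun l => rho * B t (z i) l)) mulr_sumr; apply: eq_bigr => l _; ring.
Qed.

Lemma degQ_E t k : degQ z B t k = (csize z k)%:R * ek t k * (n%:R^-1) ^+ 2.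
Proof.
rewrite /degQ /ek; under eq_bigr do rewrite mxE.
rewrite mulr_sumr mulr_suml; apply: eq_bigr => l _; ring.
Qed.

Hypothesis hBpos : forall t k l, 0 < B t k l.
Hypothesis hrho : 0 < rho.
Hypothesis hsize : forall k, (0 < csize z k)%N.

Lemma ek_gt0 t k : 0 < ek t k.
Proof.
rewrite /ek (bigD1 k) //= ltr_wpDr ?sumr_ge0 // => [l _|].
  by rewrite mulr_ge0 ?ler0n ?ltW.
by rewrite mulr_gt0 ?ltr0n ?hsize.
Qed.

Lemma sqrt_deg t i : Num.sqrt (deg z B rho t i) = Num.sqrt rho * Num.sqrt (ek t (z i)).
Proof. by rewrite deg_E sqrtrM ?ltW. Qed.

Lemma sqrt_degQ t k : Num.sqrt (degQ z B t k) =
  Num.sqrt (csize z k)%:R * Num.sqrt (ek t k) * n%:R^-1.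
Proof.
rewrite degQ_E sqrtrM; last by rewrite mulr_ge0 ?ler0n // ltW // ek_gt0.
by rewrite sqrtr_sqr ger0_norm ?invr_ge0 ?ler0n // sqrtrM ?ler0n.
Qed.

Lemma diag_conj m (d d' : 'I_m -> R) (A : 'M[R]_m) :
  diag_invsqrt d *m A *m diag_invsqrt d' =
  \matrix_(i, j) ((Num.sqrt (d i))^-1 * A i j * (Num.sqrt (d' j))^-1).
Proof. by rewrite mul_diag_mx mul_mx_diag; apply/matrixP => i j; rewrite !mxE. Qed.

Lemma PhiN_E : Phi R z *m Ninvsqrt R z =
  \matrix_(j, c) ((z j == c)%:R * (Num.sqrt (csize z c)%:R)^-1).
Proof. by rewrite mul_mx_diag; apply/matrixP => i j; rewrite !mxE. Qed.

Lemma Lt_Phi t : Lt z B rho t *m (Phi R z *m Ninvsqrt R z) =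
  (Phi R z *m Ninvsqrt R z) *m Mt z B t.
Proof.
rewrite /Lt /Mt mulmxBl mulmxBr mul1mx mulmx1; congr (_ - _).
rewrite !diag_conj PhiN_E; apply/matrixP => i c; rewrite !mxE.
under eq_bigr do rewrite !mxE !sqrt_deg.
under [RHS]eq_bigr do rewrite !mxE !sqrt_degQ.
set r := Num.sqrt rho; pose b := fun l => Num.sqrt (ek t l);
pose a := fun l => Num.sqrt ((csize z l)%:R : R); set N := (n%:R : R).
pose G l := (r * b (z i))^-1 * (rho * B t (z i) l) / (r * b l) / a c.
rewrite (eq_bigr (fun j => G (z j) * (z j == c)%:R)); last first.
  by move=> j _; rewrite /G /b; ring.
rewrite (sum_z (fun l => G l * (l == c)%:R)).
rewrite (eq_bigr (fun l => (l == c)%:R * ((csize z l)%:R * G l))); last first.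
  by move=> l _; ring.
rewrite sum_delta.
pose H k := (a k)^-1 * ((a k * b k / N)^-1 * ((csize z k)%:R / N * ((csize z c)%:R / N) * B t k c) /
      (a c * b c / N)).
rewrite (eq_bigr (fun k => (z i == k)%:R * H k)); last first.
  by move=> k _; rewrite /H /a /b; ring.
rewrite sum_delta' /G /H.
have ak l : (csize z l)%:R = a l ^+ 2 by rewrite /a sqr_sqrtr ?ler0n.
have a0 l : a l != 0 by rewrite /a sqrtr_eq0 -ltNge ltr0n hsize.
have b0 l : b l != 0 by rewrite /b sqrtr_eq0 -ltNge ek_gt0.
have r0 : r != 0 by rewrite /r sqrtr_eq0 -ltNge hrho.
have rr : rho = r ^+ 2 by rewrite /r sqr_sqrtr ?ltW.
have N0 : N != 0.
  by rewrite /N pnatr_eq0 -lt0n; apply: leq_ltn_trans (ltn_ord i).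
rewrite !ak rr; field.
by rewrite -/N N0 !a0 !b0 r0.
Qed.

Hypothesis hBsym : forall t, (B t)^T = B t.

Lemma Bsym t k l : B t k l = B t l k.
Proof. by have := congr1 (fun M : 'M[R]_K => M l k) (hBsym t); rewrite /= mxE. Qed.

Lemma Lt_sym t : (Lt z B rho t)^T = Lt z B rho t.
Proof.
rewrite /Lt linearB /= trmx1 diag_conj; congr (_ - _).
by apply/matrixP => i j; rewrite !mxE Bsym; ring.
Qed.

Lemma Mt_sym t : (Mt z B t)^T = Mt z B t.
Proof.
rewrite /Mt linearB /= trmx1 diag_conj; congr (_ - _).
by apply/matrixP => i j; rewrite !mxE Bsym; ring.
Qed.

Lemma PhiTPhi : (Phi R z *m Ninvsqrt R z)^T *m (Phi R z *m Ninvsqrt R z) = 1%:M.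
Proof.
rewrite PhiN_E; apply/matrixP => c d; rewrite !mxE.
pose G l := (l == c)%:R * (Num.sqrt ((csize z c)%:R : R))^-1 *
   ((l == d)%:R * (Num.sqrt ((csize z d)%:R : R))^-1).
rewrite (eq_bigr (fun j => G (z j))); last by move=> j _; rewrite !mxE.
rewrite sum_z (eq_bigr (fun l => (l == c)%:R * ((csize z l)%:R * 
   ((Num.sqrt ((csize z c)%:R : R))^-1 * ((l == d)%:R * (Num.sqrt ((csize z d)%:R : R))^-1)))));
  last by move=> l _; rewrite /G; ring.
rewrite sum_delta; case: eqP => [->|_] /=; rewrite ?mulr1n ?mulr0n ?mul0r ?mulr0 //.
rewrite -[X in X * _](sqr_sqrtr (ler0n _ (csize z d))); field.
by rewrite sqrtr_eq0 -ltNge ltr0n hsize.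
Qed.

Lemma Lt_perp t (y : 'cV[R]_n) : inSperp z y -> Lt z B rho t *m y = y.
Proof.
move=> hy; rewrite /Lt mulmxBl mul1mx.
suff -> : diag_invsqrt (deg z B rho t) *m Pmat z B rho t *m diag_invsqrt (deg z B rho t) *m y = 0.
  by rewrite subr0.
rewrite diag_conj; apply/matrixP => i c; rewrite ord1 !mxE (partition_big z predT) //=.
rewrite big1 // => k _.
rewrite (eq_bigr (fun j => (Num.sqrt (deg z B rho t i))^-1 * (rho * B t (z i) k) *
   (Num.sqrt (rho * ek t k))^-1 * y j 0)); last first.
  by move=> j /eqP <-; rewrite !mxE !deg_E.
by rewrite -mulr_sumr hy mulr0.
Qed.

Lemma PhiT_perp (w : 'cV[R]_n) : (Phi R z)^T *m w = 0 -> inSperp z w.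
Proof.
move=> h k; transitivity (((Phi R z)^T *m w) k 0); last by rewrite h mxE.
rewrite mxE big_mkcond; apply: eq_bigr => j _; rewrite !mxE.
by case: eqP; rewrite ?mul1r ?mul0r.
Qed.

Lemma Lfull_tr : (Lfull z B rho)^T = \mxcol_t (Lt z B rho t).
Proof. by rewrite /Lfull tr_mxrow; apply: eq_mxcol => t; rewrite Lt_sym. Qed.

Lemma Mfull_tr : (Mfull z B)^T = \mxcol_t (Mt z B t).
Proof. by rewrite /Mfull tr_mxrow; apply: eq_mxcol => t; rewrite Mt_sym. Qed.

Lemma Lfull_mulcol (v : forall t : 'I_T, 'cV[R]_n) :
  Lfull z B rho *m \mxcol_t v t = \sum_t Lt z B rho t *m v t.
Proof. by rewrite /Lfull mul_mxrow_mxcol. Qed.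

Lemma Mfull_mul (y : 'cV[R]_(\sum_(t < T) K)) :
  Mfull z B *m y = \sum_t Mt z B t *m submxcol y t.
Proof. by rewrite -[in LHS](submxcolK y) /Mfull mul_mxrow_mxcol. Qed.

Lemma LLT (y : 'cV[R]_n) :
  Lfull z B rho *m (Lfull z B rho)^T *m y = \sum_t Lt z B rho t *m (Lt z B rho t *m y).
Proof. by rewrite -mulmxA Lfull_tr mxcol_mul Lfull_mulcol. Qed.

Lemma Mt_x (x : 'cV[R]_K) t : Mt z B t *m x = submxcol ((Mfull z B)^T *m x) t.
Proof. by rewrite Mfull_tr mxcol_mul mxcolK. Qed.

Lemma sv_lift (lam : R) (x : 'cV[R]_K) (yM : 'cV[R]_(\sum_(t < T) K)) :
  yM^T *m yM = 1%:M -> Mfull z B *m yM = lam *: x -> (Mfull z B)^T *m x = lam *: yM ->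
  let Ph := Phi R z *m Ninvsqrt R z in
  let ycol := \mxcol_t (Ph *m submxcol yM t) in
  [/\ ycol^T *m ycol = 1%:M, Lfull z B rho *m ycol = lam *: (Ph *m x),
     (Lfull z B rho)^T *m (Ph *m x) = lam *: ycol &
     forall t, Lt z B rho t *m (Ph *m x) = lam *: (Ph *m submxcol yM t)].
Proof.
move=> hyy hMy hMx Ph ycol.
have h4 : forall t, Lt z B rho t *m (Ph *m x) = lam *: (Ph *m submxcol yM t).
  move=> t; rewrite mulmxA Lt_Phi -mulmxA Mt_x hMx submxcolZ scalemxAr //.
split => //.
- rewrite /ycol mxcolTmxcol.
  under eq_bigr do rewrite trmx_mul mulmxA -(mulmxA _ Ph^T) PhiTPhi mulmx1.
  by rewrite -mxcolTmxcol submxcolK.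
- rewrite /ycol Lfull_mulcol.
  under eq_bigr do rewrite mulmxA Lt_Phi -mulmxA.
  by rewrite -mulmx_sumr -Mfull_mul hMy scalemxAr.
- by rewrite Lfull_tr mxcol_mul /ycol -mxcolZ; apply: eq_mxcol => t; rewrite h4.
Qed.

End Model.

Lemma mul_col (R : pzSemiRingType) m n p (A : 'M[R]_(m, n)) (B : 'M[R]_(n, p)) j :
  A *m col j B = col j (A *m B).
Proof. by apply/matrixP => a b; rewrite !mxE; apply: eq_bigr => c _; rewrite !mxE. Qed.

Lemma col_cols (R : Type) n p (f : 'I_p -> 'cV[R]_n) i :
  col i (\matrix_(j, i) f i j 0) = f i.
Proof. by apply/matrixP => a b; rewrite !mxE ord1. Qed.

Theorem lemma3 (R : rcfType) (n K T : nat) (z : 'I_n -> 'I_K)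
  (B : 'I_T -> 'M[R]_K) (rho : R)
  (hT : (0 < T)%N)
  (hBsym : forall t, (B t)^T = B t)
  (hBpos : forall t k l, 0 < B t k l)
  (hBle1 : forall t k l, B t k l <= 1)
  (hrho : 0 < rho) (hrho1 : rho <= 1)
  (hsize : forall k, (0 < csize z k)%N)
  (lam : 'I_K -> R) (x : 'I_K -> 'cV[R]_K)
  (hlam_sorted : forall i j : 'I_K, (i <= j)%N -> lam i <= lam j)
  (hx_on : orthonormal_vecs x)
  (hx_sv : forall i, left_sing_vec (Mfull z B) (lam i) (x i)) :
  let L := Lfull z B rho in
  let u := fun i => Phi R z *m Ninvsqrt R z *m x i in
  (forall y : 'cV[R]_n, inSperp z y -> L *m L^T *m y = T%:R *: y)
  /\ (forall i, inS z (u i))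
  /\ orthonormal_vecs u
  /\ (forall i, L *m L^T *m u i = (lam i ^+ 2) *: u i)
  /\ (forall i, left_sing_vec L (lam i) (u i))
  /\ exists (W : 'M[R]_(n, n - K)) (V : 'M[R]_(\sum_(t < T) n, K + (n - K))),
       let U := row_mx (\matrix_(j, i) u i j 0) W in
       let s := row_mx (\row_i lam i) (const_mx (Num.sqrt T%:R)) in
       (forall j, inSperp z (col j W))
       /\ U^T *m U = 1%:M
       /\ V^T *m V = 1%:M
       /\ L = U *m diag_mx s *m V^T.
Proof.
move=> L u.
set Ph := Phi R z *m Ninvsqrt R z.
have uE i : u i = Ph *m x i by [].
have KN : (K <= n)%N.
  have := sum_z z (fun _ => 1 : R); rewrite sumr_const card_ord /= => h.
  have e : (K%:R : R) = \sum_(k < K) 1 by rewrite sumr_const card_ord.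
  rewrite -(ler_nat R) h e; apply: ler_sum => k _.
  by rewrite mulr1 ler1n hsize.
have p1 : forall y : 'cV[R]_n, inSperp z y -> L *m L^T *m y = T%:R *: y.
  move=> y hy; rewrite /L (LLT z rho hBsym).
  under eq_bigr do rewrite !(Lt_perp B rho _ hy).
  by rewrite sumr_const card_ord scaler_nat.
have hon : orthonormal_vecs u.
  move=> i j; rewrite !uE trmx_mul -mulmxA (mulmxA Ph^T) (PhiTPhi R hsize) mul1mx.
  exact: hx_on.
have key : forall i, exists ycol : 'cV[R]_(\sum_(t < T) n),
    [/\ ycol^T *m ycol = 1%:M, L *m ycol = lam i *: u i, L^T *m u i = lam i *: ycol &
       (lam i = 0 -> forall t, Lt z B rho t *m u i = 0)].
  move=> i; have [l0 [_ [yM [hyy [hMy hMx]]]]] := hx_sv i.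
  have [h1 h2 h3 h4] := sv_lift hBpos hrho hsize hBsym hyy hMy hMx.
  exists (\mxcol_t (Ph *m submxcol yM t)); split => // l0' t.
  by rewrite uE h4 l0' scale0r.
have p4 : forall i, L *m L^T *m u i = lam i ^+ 2 *: u i.
  move=> i; have [yc [_ h2 h3 _]] := key i.
  by rewrite -mulmxA h3 -scalemxAr h2 scalerA expr2.
have p5 : forall i, left_sing_vec L (lam i) (u i).
  move=> i; have [yc [h1 h2 h3 _]] := key i; have [l0 _] := hx_sv i.
  split => //; split; last by exists yc.
  by have := hon i i; rewrite eqxx.
split => //; split.
  by move=> i; exists (Ninvsqrt R z *m x i); rewrite uE mulmxA.
do 3 (split => //).
set U1 := \matrix_(j, i) u i j 0.
have U1U1 : U1^T *m U1 = 1%:M.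
  rewrite mxcols_mul; apply/matrixP => i j; rewrite [LHS]mxE hon !mxE eqxx mulr1n //.
have U1U1' : U1^T *m U1^T^T = 1%:M by rewrite trmxK U1U1.
have [C [AC CC]] := @ortho_complete R n (n - K) K U1^T (ltac:(lia)) U1U1'.
set W := C^T.
have hW : forall j, inSperp z (col j W).
  move=> j; apply: PhiT_perp.
  pose X := \matrix_(a, i) x i a 0.
  have XX : X^T *m X = 1%:M.
    rewrite mxcols_mul; apply/matrixP => i k; rewrite [LHS]mxE hx_on !mxE eqxx mulr1n //.
    have XX' : X *m X^T = 1%:M by apply: mulmx1C.
  have U1E : U1 = Ph *m X.
    by apply/matrixP => a i; rewrite !mxE; apply: eq_bigr => b _; rewrite !mxE.
  pose Nsq := diag_mx (\row_k Num.sqrt ((csize z k)%:R : R)).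
  have NN : Ninvsqrt R z *m Nsq = 1%:M.
    rewrite /Ninvsqrt /diag_invsqrt mul_diag_mx; apply/matrixP => a b; rewrite !mxE.
    case: eqP => [->|_]; last by rewrite mulr0n mulr0.
    rewrite mulr1n mulVf // sqrtr_eq0 -ltNge ltr0n; exact: hsize.
  have PhE : Phi R z = U1 *m X^T *m Nsq.
    by rewrite U1E -(mulmxA Ph) XX' mulmx1 /Ph -mulmxA NN mulmx1.
  by rewrite PhE !trmx_mul -!mulmxA mul_col AC col0 !mulmx0.
pose t0 := Ordinal hT.
pose J := \mxcol_t (if t == t0 then 1%:M else 0 : 'M[R]_n).
have JJ : J^T *m J = 1%:M.
  rewrite mxcolTmxcol (bigD1 t0) //= trmx1 mul1mx big1 ?addr0 // => t /negbTE ->.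
  by rewrite trmx0 mul0mx.
have UU : (row_mx U1 W)^T *m row_mx U1 W = 1%:M.
  rewrite tr_row_mx mul_col_row U1U1 /W trmxK CC AC.
  have := tr_mul0 AC; rewrite !trmxK => ->.
  by rewrite -(scalar_mx_block K (n - K)).
set s := row_mx (\row_i lam i) (const_mx (Num.sqrt T%:R)) : 'rV[R]_(K + (n - K)).
have sT : 0 < Num.sqrt (T%:R : R) by rewrite sqrtr_gt0 ltr0n.
have s0 : forall c, 0 <= s 0 c.
  move=> c; case: (split_ordP c) => [i ->|j ->]; rewrite ?row_mxEl ?row_mxEr !mxE.
    by have [l0 _] := hx_sv i.
  exact: ltW.
have hLL : forall c, L *m L^T *m col c (row_mx U1 W) = s 0 c ^+ 2 *: col c (row_mx U1 W).
  move=> c; case: (split_ordP c) => [i ->|j ->]; rewrite ?colKl ?colKr ?row_mxEl ?row_mxEr !mxE.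
    by rewrite col_cols p4.
  by rewrite p1 // sqr_sqrtr // ler0n.
have hz : forall c, s 0 c = 0 ->
    L^T *m col c (row_mx U1 W) = 0 /\ L *m J *m col c (row_mx U1 W) = 0.
  move=> c; case: (split_ordP c) => [i ->|j ->]; rewrite ?colKl ?colKr ?row_mxEl ?row_mxEr !mxE.
    move=> l0; rewrite col_cols; have [yc [_ _ h3 h4]] := key i.
    split; first by rewrite h3 l0 scale0r.
    rewrite -mulmxA mxcol_mul /L Lfull_mulcol big1 // => t _.
    by case: eqP => _; rewrite ?mul1mx ?(h4 l0) ?mul0mx ?mulmx0.
  by move=> e; move: sT; rewrite e ltxx.
have [V [VV LV]] := @svd_assemble R n _ _ L (row_mx U1 W) s J (ltac:(lia)) UU JJ s0 hLL hz.
by exists W, V.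
Qed.
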